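(* For $0<p<1$: (1) $C_{\{1,2\}}(p)<1.2183+1.6066\,\dfrac{p}{1-p}$; (2) for $J_{sym}=\{2\}\cup\{2m+1: m\geqslant 0\}$, $C_{J_{sym}}(p)<0.5893+0.9724\,\dfrac{p}{1-p}+0.1405\,\dfrac{p^2}{(1-p^2)^2}$. Moreover, for $n=2,3,\dots,10$ one has $C_{\{1,2\}}(1/n)\leqslant c_n$ and $C_{J_{sym}}(1/n)\leqslant d_n$ where $(c_2,\dots,c_{10})=(2.1327,1.6582,1.5043,1.4293,1.3851,1.3560,1.3354,1.3202,1.3085)$ and $(d_2,\dots,d_{10})=(1.0570,0.8168,0.7387,0.7001,0.6773,0.6622,0.6515,0.6436,0.6374)$.
   Context: $\mathbb{Z}^+$ denotes the set of positive integers. For $J\subset\mathbb{Z}^+$, $s\in\mathbb{Z}^+$ and $0<p<1$, \[ h_J(s,p)=\frac{(1-p)^s}{p^2}\sum_{k\in\mathbb{Z}^+\setminus J}\frac{k^2}{(k+s)^2}\binom{k+s}{k}p^k,\qquad C_J(p)=\max_{s\in\mathbb{Z}^+}h_J(s,p). \] *)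

(* Defs.v *)
From Stdlib Require Import Reals Arith.
From Coquelicot Require Import Coquelicot.
Open Scope R_scope.

(* A subset J of Z^+ is represented by a boolean predicate on nat
   (values at 0 are irrelevant, since k ranges over Z^+ only). *)

Definition hterm (J : nat -> bool) (s : nat) (p : R) (k : nat) : R :=
  if ((1 <=? k)%nat && negb (J k))%bool then
    (INR k)^2 / (INR (k + s))^2 * Binomial.C (k + s) k * p ^ k
  else 0.

Definition h (J : nat -> bool) (s : nat) (p : R) : R :=
  (1 - p) ^ s / p ^ 2 * Series (hterm J s p).

(* C_J(p) = max_{s in Z^+} h_J(s,p), formalized as the supremum
   (in extended reals) of h_J(s,p) over s >= 1. *)
Definition CJ (J : nat -> bool) (p : R) : Rbar :=
  Lub_Rbar (fun x => exists s : nat, (1 <= s)%nat /\ x = h J s p).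

Definition J12 (k : nat) : bool := ((k =? 1)%nat || (k =? 2)%nat)%bool.

Definition Jsym (k : nat) : bool := ((k =? 2)%nat || Nat.odd k)%bool.

Definition cval (n : nat) : R :=
  match n with
  | 2 => 21327/10000 | 3 => 16582/10000 | 4 => 15043/10000
  | 5 => 14293/10000 | 6 => 13851/10000 | 7 => 13560/10000
  | 8 => 13354/10000 | 9 => 13202/10000 | 10 => 13085/10000
  | _ => 0 end.

Definition dval (n : nat) : R :=
  match n with
  | 2 => 10570/10000 | 3 => 8168/10000 | 4 => 7387/10000
  | 5 => 7001/10000 | 6 => 6773/10000 | 7 => 6622/10000
  | 8 => 6515/10000 | 9 => 6436/10000 | 10 => 6374/10000
  | _ => 0 end.

(* Main.v *)
Require Import Defs.
From Stdlib Require Import Reals Arith Lia Lra ZArith List Bool QArith Qreals Qround.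
From Coquelicot Require Import Coquelicot.
Open Scope R_scope.

Fixpoint nb (m j : nat) : R :=
  match j with
  | O => 1
  | S j' => nb m j' * INR (S j' + m) / INR (S j')
  end.

Lemma nb_S m j : nb m (S j) = nb m j * INR (S j + m) / INR (S j).
Proof. reflexivity. Qed.

Lemma nb_pos m j : 0 < nb m j.
Proof.
  induction j as [|j IH]; [simpl; lra|]. rewrite nb_S.
  apply Rdiv_lt_0_compat; [apply Rmult_lt_0_compat; [exact IH|] |];
  apply lt_0_INR; lia.
Qed.

Lemma C_fact n k : (k <= n)%nat ->
  Binomial.C n k = INR (fact n) / (INR (fact k) * INR (fact (n - k))).
Proof. intros; unfold Binomial.C; reflexivity. Qed.

Lemma nb_C s k : Binomial.C (k + s) k = nb s k.
Proof.
  rewrite C_fact by lia. replace (k + s - k)%nat with s by lia.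
  induction k as [|k IH].
  - cbn [nb]. rewrite Nat.add_0_l. simpl (fact 0). rewrite INR_1. field. apply INR_fact_neq_0.
  - rewrite nb_S, <- IH.
    replace (S k + s)%nat with (S (k + s)) by lia.
    rewrite !fact_simpl, !mult_INR.
    assert (H1 := INR_fact_neq_0 k). assert (H2 := INR_fact_neq_0 s).
    assert (H3: INR (S k) <> 0) by (apply not_0_INR; lia).
    field. auto.
Qed.

Lemma nb_0 j : nb 0 j = 1.
Proof.
  induction j as [|j IH]; [reflexivity|]. rewrite nb_S.
  rewrite IH, Nat.add_0_r. field. apply not_0_INR; lia.
Qed.

Lemma nb_Sm m n : nb (S m) n = nb m n * INR (n + S m) / INR (S m).
Proof.
  induction n as [|n IH].
  - cbn [nb]. rewrite Nat.add_0_l. field. apply not_0_INR; lia.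
  - rewrite !nb_S, IH.
    replace (S n + S m)%nat with (S (S (n + m))) by lia.
    replace (n + S m)%nat with (S (n + m)) by lia.
    replace (S n + m)%nat with (S (n + m)) by lia.
    rewrite !S_INR.
    assert (0 <= INR n) by apply pos_INR. assert (0 <= INR m) by apply pos_INR.
    field. lra.
Qed.

Lemma nb_pascal m n : nb (S m) (S n) = nb (S m) n + nb m (S n).
Proof.
  rewrite !nb_Sm, nb_S.
  replace (S n + S m)%nat with (S (S (n + m))) by lia.
  replace (n + S m)%nat with (S (n + m)) by lia.
  replace (S n + m)%nat with (S (n + m)) by lia.
  rewrite !S_INR.
  assert (0 <= INR n) by apply pos_INR. assert (0 <= INR m) by apply pos_INR.
  rewrite plus_INR. field. lra.
Qed.

Lemma nb_hockey m n : nb (S m) n = sum_f_R0 (nb m) n.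
Proof.
  induction n as [|n IH].
  - reflexivity.
  - rewrite nb_pascal, IH. reflexivity.
Qed.

Lemma nb_series m : forall x, Rabs x < 1 ->
  is_series (fun j => nb m j * x ^ j) (/ (1 - x) ^ (S m)).
Proof.
  induction m as [|m IH]; intros x Hx.
  - replace (/ (1 - x) ^ 1) with (/ (1 - x)) by (f_equal; ring).
    apply (is_series_ext (fun n => x ^ n)); [|apply is_series_geom; exact Hx].
    intros n. rewrite nb_0. symmetry. apply Rmult_1_l.
  - assert (Hx1 : 0 < 1 - x) by (apply Rabs_def2 in Hx; lra).
    assert (Habs : forall k, Rabs (nb m k * x ^ k) = nb m k * Rabs x ^ k).
    { intros k. rewrite Rabs_mult, Rabs_right, RPow_abs; [reflexivity|].
      left; apply nb_pos. }
    assert (Hax : Rabs (Rabs x) < 1) by (rewrite Rabs_Rabsolu; exact Hx).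
    pose proof (is_series_mult (fun j => nb m j * x ^ j) (fun j => x ^ j) _ _
      (IH x Hx) (is_series_geom x Hx)) as HM.
    replace (/ (1 - x) ^ S (S m)) with
        (/ (1 - x) ^ S m * / (1 - x)) by (simpl; field; split; try apply pow_nonzero; lra).
    refine (is_series_ext _ _ _ _ (HM _ _)).
    + intros n. rewrite nb_hockey, Rmult_comm, scal_sum.
      apply sum_eq. intros i Hi.
      rewrite Rmult_assoc, <- pow_add. f_equal. f_equal. lia.
    + eapply ex_series_ext; [intros k; symmetry; apply Habs|].
      eexists; apply (IH _ Hax).
    + eapply ex_series_ext; [intros k; rewrite RPow_abs; reflexivity|].
      eexists; apply is_series_geom; exact Hax.
Qed.

Lemma series_partial_le (g : nat -> R) G :
  is_series g G -> (forall n, 0 <= g n) -> forall N, sum_n g N <= G.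
Proof.
  intros H Hp N. apply (is_lim_seq_incr_compare (sum_n g) G); [exact H|].
  intros n. rewrite sum_Sn. specialize (Hp (S n)). unfold plus; simpl. lra.
Qed.

Lemma Series_le_partial (a : nat -> R) M :
  (forall n, 0 <= a n) -> (forall N, sum_n a N <= M) -> Series a <= M.
Proof.
  intros Hp HN. unfold Series.
  assert (HM : 0 <= M) by (specialize (HN O); rewrite sum_O in HN; specialize (Hp O); lra).
  assert (H : Rbar_le (Lim_seq (sum_n a)) (Lim_seq (fun _ => M))).
  { apply Lim_seq_le_loc. exists O. intros; apply HN. }
  rewrite Lim_seq_const in H.
  destruct (Lim_seq (sum_n a)) as [l| |]; simpl in *; lra.
Qed.

Lemma sfr_S (a : nat -> R) N : sum_f_R0 a (S N) = sum_f_R0 a N + a (S N).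
Proof. reflexivity. Qed.

Lemma sfr_shift2 (a : nat -> R) N :
  sum_f_R0 a (S (S N)) = a O + a 1%nat + sum_f_R0 (fun j => a (S (S j))) N.
Proof.
  induction N as [|N IH].
  - simpl. ring.
  - rewrite sfr_S, IH, sfr_S. ring.
Qed.

Lemma sfr_mono (a : nat -> R) N M : (forall n, 0 <= a n) -> (N <= M)%nat ->
  sum_f_R0 a N <= sum_f_R0 a M.
Proof.
  intros Ha HNM. induction HNM as [|M HNM IH]; [lra|].
  rewrite sfr_S. specialize (Ha (S M)). lra.
Qed.

Lemma sfr_le (a b : nat -> R) N : (forall n, a n <= b n) ->
  sum_f_R0 a N <= sum_f_R0 b N.
Proof.
  intros H. induction N as [|N IH]; [apply H|]. rewrite !sfr_S. specialize (H (S N)). lra.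
Qed.

Lemma series_partial_le' (g : nat -> R) G :
  is_series g G -> (forall n, 0 <= g n) -> forall N, sum_f_R0 g N <= G.
Proof. intros H Hp N. rewrite <- sum_n_Reals. apply series_partial_le; auto. Qed.

Lemma Series_le_partial' (a : nat -> R) M :
  (forall n, 0 <= a n) -> (forall N, sum_f_R0 a N <= M) -> Series a <= M.
Proof. intros Hp HN. apply Series_le_partial; auto. intros N; rewrite sum_n_Reals; auto. Qed.

Lemma hterm_nonneg J s p k : 0 < p -> 0 <= hterm J s p k.
Proof.
  intros Hp. unfold hterm. destruct (1 <=? k)%nat eqn:Hk; simpl andb; [|lra].
  destruct (negb (J k)); [|lra]. apply Nat.leb_le in Hk.
  rewrite nb_C. apply Rmult_le_pos; [apply Rmult_le_pos|].
  - unfold Rdiv. apply Rmult_le_pos; [apply pow2_ge_0|]. left; apply Rinv_0_lt_compat.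
    apply pow_lt. apply lt_0_INR. lia.
  - left; apply nb_pos.
  - left; apply pow_lt; exact Hp.
Qed.

Lemma term_bound s' j p : 0 < p ->
  INR (S (S j)) ^ 2 / INR (S (S j) + S s') ^ 2 * nb (S s') (S (S j)) * p ^ (S (S j))
  <= p ^ 2 * (nb (S s') j * p ^ j) + p / INR (S s') * (nb s' (S j) * p ^ (S j)).
Proof.
  intros Hp.
  rewrite !nb_S, nb_Sm.
  set (X := nb s' j). assert (HX : 0 < X) by apply nb_pos.
  assert (HP : 0 < p ^ j) by (apply pow_lt; lra).
  set (P := p ^ j) in *.
  replace (p ^ S (S j)) with (p ^ 2 * P) by (unfold P; simpl; ring).
  replace (p ^ S j) with (p * P) by (unfold P; simpl; ring).
  replace (S (S j) + S s')%nat with (S (S (S (j + s')))) by lia.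
  replace (S j + S s')%nat with (S (S (j + s'))) by lia.
  replace (j + S s')%nat with (S (j + s')) by lia.
  replace (S j + s')%nat with (S (j + s')) by lia.
  rewrite !S_INR, !plus_INR.
  assert (Ha : 0 <= INR j) by apply pos_INR. assert (Hb : 0 <= INR s') by apply pos_INR.
  set (a := INR j) in *. set (b := INR s') in *.
  assert (Hp2 : 0 < p ^ 2) by (apply pow_lt; lra).
  match goal with |- ?L <= ?R =>
    assert (E : R - L = P * p ^ 2 * X * (a + b + 1) * (a + 2) / ((b + 1) * (a + 1) * (a + b + 3)))
  end.
  { field. repeat split; lra. }
  assert (0 <= P * p ^ 2 * X * (a + b + 1) * (a + 2) / ((b + 1) * (a + 1) * (a + b + 3))).
  { apply Rmult_le_pos; [|left; apply Rinv_0_lt_compat; apply Rmult_lt_0_compat; [apply Rmult_lt_0_compat|]; lra].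
    repeat apply Rmult_le_pos; lra. }
  lra.
Qed.

Lemma sum_g12 (a b : nat -> R) c1 c2 N :
  sum_f_R0 (fun j => if (j =? 0)%nat then 0 else c1 * a j + c2 * b (S j)) N =
  c1 * (sum_f_R0 a N - a O) + c2 * (sum_f_R0 b (S N) - b O - b 1%nat).
Proof.
  induction N as [|N IH].
  - simpl. ring.
  - rewrite sfr_S, IH. rewrite (sfr_S a), (sfr_S b (S N)). simpl (S N =? 0)%nat. cbv iota. ring.
Qed.

Lemma sum_gsym (a b : nat -> R) c1 c2 N :
  sum_f_R0 (fun j => if (j =? 0)%nat then 0 else if Nat.even j then c1 * a j + c2 * b (S j) else 0) N =
  c1 * (sum_f_R0 (fun j => if Nat.even j then a j else 0) N - a O)
  + c2 * (sum_f_R0 (fun j => if Nat.even j then 0 else b j) (S N) - b 1%nat).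
Proof.
  induction N as [|N IH].
  - simpl. ring.
  - rewrite sfr_S, IH. rewrite (sfr_S (fun j => if Nat.even j then a j else 0)).
    rewrite (sfr_S (fun j => if Nat.even j then 0 else b j) (S N)).
    simpl (S N =? 0)%nat. rewrite Nat.even_succ_succ, Nat.even_succ, <- Nat.negb_even.
    destruct (Nat.even N); simpl; ring.
Qed.

Lemma pow_neg_even x j : (- x) ^ j = if Nat.even j then x ^ j else - x ^ j.
Proof.
  induction j as [|j IH]; [reflexivity|].
  simpl pow. rewrite IH, Nat.even_succ, <- Nat.negb_even.
  destruct (Nat.even j); simpl; ring.
Qed.

Lemma hterm_0 J s p : hterm J s p O = 0.
Proof. reflexivity. Qed.

Lemma hterm_SS J s p j : hterm J s p (S (S j)) =
  if negb (J (S (S j))) then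
    INR (S (S j)) ^ 2 / INR (S (S j) + s) ^ 2 * nb s (S (S j)) * p ^ (S (S j)) else 0.
Proof. unfold hterm. simpl ((1 <=? S (S j))%nat). simpl andb. rewrite nb_C. reflexivity. Qed.

Lemma partial_to_h J s p M : 0 < p < 1 ->
  (forall N, sum_f_R0 (fun j => hterm J s p (S (S j))) N <= M) ->
  hterm J s p 1%nat = 0 ->
  h J s p <= (1 - p) ^ s / p ^ 2 * M.
Proof.
  intros Hp HN H1. unfold h.
  apply Rmult_le_compat_l.
  { unfold Rdiv. apply Rmult_le_pos; [apply pow_le; lra|].
    left; apply Rinv_0_lt_compat, pow_lt; lra. }
  apply Series_le_partial'; [intros; apply hterm_nonneg; lra|].
  intros N. apply Rle_trans with (sum_f_R0 (hterm J s p) (S (S N))).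
  - apply sfr_mono; [intros; apply hterm_nonneg; lra|lia].
  - rewrite sfr_shift2, hterm_0, H1. specialize (HN N). lra.
Qed.

Lemma F12_bound s p : (1 <= s)%nat -> 0 < p < 1 ->
  h J12 s p <= 1 / (1 - p) + (1 - (1 - p) ^ s) / (INR s * p) - 2 * (1 - p) ^ s.
Proof.
  intros Hs Hp. destruct s as [|s']; [lia|].
  assert (Hx : Rabs p < 1) by (rewrite Rabs_right; lra).
  pose proof (nb_series (S s') p Hx) as Ha.
  pose proof (nb_series s' p Hx) as Hb.
  set (a := fun j => nb (S s') j * p ^ j) in Ha.
  set (b := fun j => nb s' j * p ^ j) in Hb.
  assert (HS : 0 < INR (S s')) by (apply lt_0_INR; lia).
  eapply Rle_trans; [apply (partial_to_h _ _ _
     (p ^ 2 * (/ (1 - p) ^ S (S s') - 1) + p / INR (S s') * (/ (1 - p) ^ S s' - 1 - INR (S s') * p)))|].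
  - exact Hp.
  - intros N. eapply Rle_trans; [apply (sfr_le _ (fun j => if (j =? 0)%nat then 0 else p ^ 2 * a j + p / INR (S s') * b (S j)))|].
    + intros j. rewrite hterm_SS. unfold J12.
      destruct j as [|j]; [simpl; lra|].
      simpl ((S j =? 0)%nat). simpl (negb _).
      unfold a, b. apply term_bound; lra.
    + rewrite sum_g12.
      assert (A0 : a O = 1) by (unfold a; simpl; ring).
      assert (B0 : b O = 1) by (unfold b; simpl; ring).
      assert (B1 : b 1%nat = INR (S s') * p) by (unfold b; rewrite nb_S; cbn [nb pow]; replace (1 + s')%nat with (S s') by lia; change (INR 1) with 1; field).
      rewrite A0, B0, B1.
      assert (Pa := series_partial_le' a _ Ha (fun n => Rmult_le_pos _ _ (Rlt_le _ _ (nb_pos _ _)) (pow_le _ _ (Rlt_le _ _ (proj1 Hp)))) N).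
      assert (Pb := series_partial_le' b _ Hb (fun n => Rmult_le_pos _ _ (Rlt_le _ _ (nb_pos _ _)) (pow_le _ _ (Rlt_le _ _ (proj1 Hp)))) (S N)).
      assert (0 < p ^ 2) by (apply pow_lt; lra).
      assert (0 < p / INR (S s')) by (apply Rdiv_lt_0_compat; lra).
      apply Rplus_le_compat; apply Rmult_le_compat_l; lra.
  - reflexivity.
  - right. assert (0 < 1 - p) by lra. assert (0 < (1 - p) ^ s') by (apply pow_lt; lra).
    simpl pow. field. repeat split; lra.
Qed.

Lemma even_series m p : 0 < p < 1 ->
  is_series (fun j => if Nat.even j then nb m j * p ^ j else 0)
    (/ 2 * (/ (1 - p) ^ S m + / (1 + p) ^ S m)).
Proof.
  intros Hp.
  assert (H1 := nb_series m p ltac:(rewrite Rabs_right; lra)).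
  assert (H2 := nb_series m (- p) ltac:(rewrite Rabs_Ropp, Rabs_right; lra)).
  replace (1 + p) with (1 - - p) by ring.
  assert (H := is_series_scal (/ 2) _ _ (is_series_plus _ _ _ _ H1 H2)).
  refine (is_series_ext _ _ _ _ H).
  intros n. unfold scal, plus; simpl. unfold mult; simpl. rewrite pow_neg_even.
  destruct (Nat.even n); field.
Qed.

Lemma odd_series m p : 0 < p < 1 ->
  is_series (fun j => if Nat.even j then 0 else nb m j * p ^ j)
    (/ 2 * (/ (1 - p) ^ S m - / (1 + p) ^ S m)).
Proof.
  intros Hp.
  assert (H1 := nb_series m p ltac:(rewrite Rabs_right; lra)).
  assert (H2 := nb_series m (- p) ltac:(rewrite Rabs_Ropp, Rabs_right; lra)).
  replace (1 + p) with (1 - - p) by ring.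
  assert (H := is_series_scal (/ 2) _ _ (is_series_minus _ _ _ _ H1 H2)).
  refine (is_series_ext _ _ _ _ H).
  intros n. unfold scal, minus, plus, opp; simpl. unfold mult; simpl. rewrite pow_neg_even.
  destruct (Nat.even n); field.
Qed.

Lemma Jsym_SSS j : negb (Jsym (S (S (S j)))) = Nat.even (S j).
Proof.
  unfold Jsym. rewrite <- Nat.negb_even, Nat.even_succ_succ.
  change ((S (S (S j)) =? 2)%nat) with false. destruct (Nat.even (S j)); reflexivity.
Qed.

Lemma Fsym_bound s p : (1 <= s)%nat -> 0 < p < 1 ->
  h Jsym s p <= 1 / (2 * (1 - p)) + 1 / (2 * INR s * p)
    + (1 - p) ^ s / (1 + p) ^ s * (1 / (2 * (1 + p)) - 1 / (2 * INR s * p))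
    - 2 * (1 - p) ^ s.
Proof.
  intros Hs Hp. destruct s as [|s']; [lia|].
  pose proof (even_series (S s') p Hp) as Ha.
  pose proof (odd_series s' p Hp) as Hb.
  set (a := fun j => nb (S s') j * p ^ j).
  set (b := fun j => nb s' j * p ^ j).
  assert (HS : 0 < INR (S s')) by (apply lt_0_INR; lia).
  eapply Rle_trans; [apply (partial_to_h _ _ _
     (p ^ 2 * (/ 2 * (/ (1 - p) ^ S (S s') + / (1 + p) ^ S (S s')) - 1)
      + p / INR (S s') * (/ 2 * (/ (1 - p) ^ S s' - / (1 + p) ^ S s') - INR (S s') * p)))|].
  - exact Hp.
  - intros N. eapply Rle_trans; [apply (sfr_le _ (fun j => if (j =? 0)%nat then 0 else if Nat.even j then p ^ 2 * a j + p / INR (S s') * b (S j) else 0))|].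
    + intros j. rewrite hterm_SS.
      destruct j as [|j]; [simpl; lra|].
      rewrite Jsym_SSS. simpl ((S j =? 0)%nat). cbv iota.
      destruct (Nat.even (S j)); [|lra].
      unfold a, b. apply term_bound; lra.
    + rewrite sum_gsym.
      assert (A0 : a O = 1) by (unfold a; simpl; ring).
      assert (B1 : b 1%nat = INR (S s') * p) by (unfold b; rewrite nb_S; cbn [nb pow]; replace (1 + s')%nat with (S s') by lia; change (INR 1) with 1; field).
      rewrite A0, B1.
      assert (Pa : sum_f_R0 (fun j => if Nat.even j then a j else 0) N <= / 2 * (/ (1 - p) ^ S (S s') + / (1 + p) ^ S (S s'))).
      { apply series_partial_le'; [exact Ha|]. intros n. unfold a. destruct (Nat.even n); [apply Rmult_le_pos; [left; apply nb_pos|apply pow_le; lra]|lra]. }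
      assert (Pb : sum_f_R0 (fun j => if Nat.even j then 0 else b j) (S N) <= / 2 * (/ (1 - p) ^ S s' - / (1 + p) ^ S s')).
      { apply series_partial_le'; [exact Hb|]. intros n. unfold b. destruct (Nat.even n); [lra|apply Rmult_le_pos; [left; apply nb_pos|apply pow_le; lra]]. }
      assert (0 < p ^ 2) by (apply pow_lt; lra).
      assert (0 < p / INR (S s')) by (apply Rdiv_lt_0_compat; lra).
      apply Rplus_le_compat; apply Rmult_le_compat_l; lra.
  - reflexivity.
  - right. assert (0 < 1 - p) by lra. assert (0 < (1 - p) ^ s') by (apply pow_lt; lra).
    assert (0 < (1 + p) ^ s') by (apply pow_lt; lra).
    simpl pow. field. repeat split; lra.
Qed.

Lemma pow_le1 x n : 0 <= x <= 1 -> x ^ n <= 1.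
Proof.
  intros Hx. induction n as [|n IH]; simpl; [lra|].
  assert (0 <= x ^ n) by (apply pow_le; lra). nra.
Qed.

Lemma Rmult_le_0_r a b : 0 <= a -> b <= 0 -> a * b <= 0.
Proof. intros; nra. Qed.

Lemma inv_ge1 x : 0 < x <= 1 -> 1 <= / x.
Proof. intros. rewrite <- Rinv_1 at 1. apply Rinv_le_contravar; lra. Qed.

Lemma inv_le1 x : 1 <= x -> / x <= 1.
Proof. intros. rewrite <- Rinv_1. apply Rinv_le_contravar; lra. Qed.

Lemma pow_ge1 x n : 1 <= x -> 1 <= x ^ n.
Proof. intros Hx. induction n as [|n IH]; simpl; nra. Qed.

Lemma CJ_le J p M : (forall s, (1 <= s)%nat -> h J s p <= M) -> Rbar_le (CJ J p) (Finite M).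
Proof.
  intros H. unfold CJ.
  destruct (Lub_Rbar_correct (fun x => exists s : nat, (1 <= s)%nat /\ x = h J s p)) as [_ Hl].
  apply Hl. intros x [s [Hs ->]]. simpl. apply H, Hs.
Qed.

Lemma exp_pow_nat a n : exp a ^ n = exp (INR n * a).
Proof.
  induction n as [|n IH].
  - simpl. rewrite Rmult_0_l, exp_0. reflexivity.
  - simpl pow. rewrite IH, S_INR, <- exp_plus. f_equal. ring.
Qed.

Lemma y_lower s p : 0 < p < 1 ->
  exp (- (INR s * (p / (1 - p)))) <= (1 - p) ^ s.
Proof.
  intros Hp.
  replace (- (INR s * (p / (1 - p)))) with (INR s * (- (p / (1 - p)))) by ring.
  rewrite <- exp_pow_nat. apply pow_incr. split; [left; apply exp_pos|].
  set (t := p / (1 - p)).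
  assert (H := exp_ineq1_le t).
  rewrite exp_Ropp.
  assert (E : 1 - p = / (1 + t)) by (unfold t; field; lra). rewrite E.
  apply Rinv_le_contravar; [|exact H].
  assert (0 <= t) by (apply Rdiv_le_0_compat; lra). lra.
Qed.

Definition P1f u E := E * (1 + 2 * u) - 1 + 21829 / 100000 * u.
Definition P1bf u E := E * (1 + 3 * u) - 1 - 78171 / 100000 * u + 6066 / 10000 * u ^ 2.
Definition P2f u E := E ^ 2 * (1 - u) + 4 * u * E + 1785 / 10000 * u - 1.
Definition P2bf u E := E ^ 2 + 4 * u * E - 1 - 8215 / 10000 * u + 6114 / 10000 * u ^ 2.

Lemma lin_endpoints u t f0 fu : 0 < u -> 0 <= t <= u -> f0 <= 0 -> fu <= 0 ->
  (u - t) / u * f0 + t / u * fu <= 0.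
Proof.
  intros Hu Ht H0 H1.
  assert (0 <= (u - t) / u) by (apply Rdiv_le_0_compat; lra).
  assert (0 <= t / u) by (apply Rdiv_le_0_compat; lra).
  nra.
Qed.

Lemma red1 :
  (forall u, 0 < u -> 0 <= P1f u (exp (- u))) ->
  (forall u, 0 < u -> 0 <= P1bf u (exp (- u))) ->
  forall s p, (1 <= s)%nat -> 0 < p < 1 ->
  h J12 s p <= 121829 / 100000 + 16066 / 10000 * (p / (1 - p)).
Proof.
  intros HP1 HP1b s p Hs Hp.
  eapply Rle_trans; [apply F12_bound; auto|].
  set (t := p / (1 - p)).
  assert (Ht : 0 < t) by (unfold t; apply Rdiv_lt_0_compat; lra).
  assert (HS : 1 <= INR s) by (apply (le_INR 1); lia).
  set (u := INR s * t).
  assert (Hu : t <= u) by (unfold u; nra).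
  set (E := exp (- u)).
  assert (HE : E <= (1 - p) ^ s) by (apply y_lower; auto).
  assert (HE0 : 0 < E) by apply exp_pos.
  assert (Hsp : 0 < INR s * p) by nra.
  assert (Hm : (1 - (1 - p) ^ s) / (INR s * p) - 2 * (1 - p) ^ s <= (1 - E) / (INR s * p) - 2 * E).
  { unfold Rdiv. assert (0 < / (INR s * p)) by (apply Rinv_0_lt_compat; lra).
    assert (0 <= ((1 - p) ^ s - E) * / (INR s * p)) by (apply Rmult_le_pos; lra).
    assert (((1 - E) * / (INR s * p) - 2 * E) - ((1 - (1 - p) ^ s) * / (INR s * p) - 2 * (1 - p) ^ s)
      = ((1 - p) ^ s - E) * / (INR s * p) + 2 * ((1 - p) ^ s - E)) by ring.
    lra. }
  assert (Hq : 1 / (1 - p) = 1 + t) by (unfold t; field; lra).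
  assert (Hx : 1 / (INR s * p) = (1 + t) / u) by (unfold u, t; field; lra).
  assert (A0 := HP1 u ltac:(lra)). assert (A1 := HP1b u ltac:(lra)).
  fold E in A0, A1. unfold P1f, P1bf in *.
  assert (Key : (1 + t) + (1 + t) * (1 - E) / u - 2 * E - (121829 / 100000 + 16066 / 10000 * t)
     = ((u - t) / u * (- (E * (1 + 2 * u) - 1 + 21829 / 100000 * u))
        + t / u * (- (E * (1 + 3 * u) - 1 - 78171 / 100000 * u + 6066 / 10000 * u ^ 2))) / u).
  { field. lra. }
  assert (Hl := lin_endpoints u t (- (E * (1 + 2 * u) - 1 + 21829 / 100000 * u))
     (- (E * (1 + 3 * u) - 1 - 78171 / 100000 * u + 6066 / 10000 * u ^ 2)) ltac:(lra) ltac:(lra) ltac:(lra) ltac:(lra)).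
  assert (Hdiv : ((u - t) / u * (- (E * (1 + 2 * u) - 1 + 21829 / 100000 * u))
        + t / u * (- (E * (1 + 3 * u) - 1 - 78171 / 100000 * u + 6066 / 10000 * u ^ 2))) / u <= 0).
  { unfold Rdiv at 3. assert (0 < / u) by (apply Rinv_0_lt_compat; lra). nra. }
  replace ((1 - E) / (INR s * p)) with ((1 - E) * (1 / (INR s * p))) in Hm by (field; lra).
  rewrite Hx in Hm. rewrite Hq.
  replace ((1 - E) * ((1 + t) / u)) with ((1 + t) * (1 - E) / u) in Hm by (field; lra).
  lra.
Qed.

Lemma exp_ge_3u u : 0 <= u -> 3 * u <= exp (3 * u / 2).
Proof.
  intros Hu. replace (3 * u / 2) with (3 * u / 4 + 3 * u / 4) by field.
  rewrite exp_plus. assert (H := exp_ineq1_le (3 * u / 4)). assert (0 <= 1 + 3 * u / 4) by lra.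
  assert (H2 : (1 + 3 * u / 4) * (1 + 3 * u / 4) <= exp (3 * u / 4) * exp (3 * u / 4)).
  { apply Rmult_le_compat; lra. }
  assert (0 <= (1 - 3 * u / 4) * (1 - 3 * u / 4)) by apply Rle_0_sqr. nra.
Qed.

Lemma EK_bound s p : (1 <= s)%nat -> 0 < p < 1 ->
  let t := p / (1 - p) in let u := INR s * t in
  exp (- u) ^ 2 * / (1 - p ^ 2) ^ s <= exp (- u) ^ 2 + t / 3.
Proof.
  intros Hs Hp t u.
  assert (Ht : 0 < t) by (unfold t; apply Rdiv_lt_0_compat; lra).
  assert (HS : 1 <= INR s) by (apply (le_INR 1); lia).
  assert (Hu : t <= u) by (unfold u; nra).
  set (d := p ^ 2 / (1 - p ^ 2)).
  assert (Hp2 : 0 < 1 - p ^ 2) by nra.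
  assert (Hd : d = t ^ 2 / (1 + 2 * t)) by (unfold d, t; field; split; nra).
  set (c := INR s * d).
  assert (Hc : c = u * t / (1 + 2 * t)) by (unfold c, u; rewrite Hd; field; lra).
  assert (HK : / (1 - p ^ 2) ^ s <= exp c).
  { unfold c. rewrite <- exp_pow_nat. rewrite <- pow_inv. apply pow_incr. split.
    - left; apply Rinv_0_lt_compat; exact Hp2.
    - replace (/ (1 - p ^ 2)) with (1 + d) by (unfold d; field; lra). apply exp_ineq1_le. }
  assert (Hc0 : 0 <= c) by (rewrite Hc; apply Rdiv_le_0_compat; nra).
  assert (Hc1 : c <= u * t) by (rewrite Hc; apply Rmult_le_reg_r with (1 + 2 * t); [lra|];
     unfold Rdiv; rewrite Rmult_assoc, Rinv_l by lra; nra).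
  assert (Hc2 : c <= u / 2) by (rewrite Hc; apply Rmult_le_reg_r with (1 + 2 * t); [lra|];
     unfold Rdiv; rewrite Rmult_assoc, Rinv_l by lra; nra).
  assert (Hec : exp c - 1 <= c * exp c).
  { assert (H1 := exp_ineq1_le (- c)). assert (H2 : exp (- c) * exp c = 1) by (rewrite <- exp_plus; replace (- c + c) with 0 by ring; apply exp_0).
    assert (0 < exp c) by apply exp_pos. nra. }
  assert (Hexp : exp c <= exp (u / 2)) by (apply exp_le_3; lra) || (destruct (Rle_lt_or_eq_dec _ _ Hc2) as [H|H]; [left; apply exp_increasing; exact H|rewrite H; lra]).
  assert (HE2 : exp (- u) ^ 2 * exp (u / 2) = exp (- (3 * u / 2))).
  { simpl pow. rewrite Rmult_1_r, <- !exp_plus. f_equal. field. }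
  assert (H3 := exp_ge_3u u ltac:(lra)).
  assert (H3' : u * exp (- (3 * u / 2)) <= 1 / 3).
  { rewrite exp_Ropp. assert (0 < exp (3 * u / 2)) by apply exp_pos.
    apply Rmult_le_reg_r with (exp (3 * u / 2)); [lra|].
    rewrite Rmult_assoc, Rinv_l by lra. lra. }
  assert (HE0 : 0 <= exp (- u) ^ 2) by (apply pow_le; left; apply exp_pos).
  assert (Hexp0 : 0 < exp c) by apply exp_pos.
  (* E^2 * K - E^2 <= E^2 * c * exp c <= E^2 * u * t * exp (u/2) = t * u * exp(-3u/2) <= t/3 *)
  assert (S1 : exp (- u) ^ 2 * / (1 - p ^ 2) ^ s - exp (- u) ^ 2 <= exp (- u) ^ 2 * (c * exp c)) by nra.
  assert (S2 : c * exp c <= u * t * exp (u / 2)).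
  { apply Rmult_le_compat; lra. }
  assert (S3 : exp (- u) ^ 2 * (u * t * exp (u / 2)) = t * (u * exp (- (3 * u / 2)))).
  { rewrite <- HE2. ring. }
  assert (S4 : exp (- u) ^ 2 * (c * exp c) <= exp (- u) ^ 2 * (u * t * exp (u / 2))) by (apply Rmult_le_compat_l; lra).
  nra.
Qed.

Lemma red2 :
  (forall u, 0 < u -> 0 <= P2f u (exp (- u))) ->
  (forall u, 0 < u -> 0 <= P2bf u (exp (- u))) ->
  forall s p, (1 <= s)%nat -> 0 < p < 1 ->
  h Jsym s p <= 58925 / 100000 + 9724 / 10000 * (p / (1 - p)).
Proof.
  intros HP2 HP2b s p Hs Hp.
  eapply Rle_trans; [apply Fsym_bound; auto|].
  assert (HEK := EK_bound s p Hs Hp). cbv zeta in HEK.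
  set (t := p / (1 - p)) in *.
  assert (Ht : 0 < t) by (unfold t; apply Rdiv_lt_0_compat; lra).
  assert (HS : 1 <= INR s) by (apply (le_INR 1); lia).
  set (u := INR s * t) in *.
  assert (Hu : t <= u) by (unfold u; nra).
  set (E := exp (- u)) in *.
  set (y := (1 - p) ^ s).
  assert (HE : E <= y) by (apply y_lower; auto).
  assert (HE0 : 0 < E) by apply exp_pos.
  assert (Hy1 : y <= 1) by (unfold y; apply pow_le1; lra).
  assert (Hsp : 0 < INR s * p) by nra.
  assert (Hyp : 0 < (1 + p) ^ s) by (apply pow_lt; lra).
  assert (Hyq : 0 < y) by (unfold y; apply pow_lt; lra).
  set (K := / (1 - p ^ 2) ^ s) in *.
  assert (HKd : (1 - p ^ 2) ^ s = y * (1 + p) ^ s)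
    by (unfold y; rewrite <- Rpow_mult_distr; f_equal; ring).
  assert (Hw : y / (1 + p) ^ s = y ^ 2 * K)
    by (unfold K; rewrite HKd; fold y; field; lra).
  assert (HKy : K * y <= 1).
  { unfold K. rewrite HKd. replace (/ (y * (1 + p) ^ s) * y) with (/ (1 + p) ^ s) by (field; lra).
    rewrite <- pow_inv. apply pow_le1. split; [left; apply Rinv_0_lt_compat; lra|].
    apply inv_le1; lra. }
  assert (HK1 : 1 <= K).
  { unfold K. rewrite <- pow_inv. apply pow_ge1.
    assert (0 < p ^ 2) by (apply pow_lt; lra). assert (p ^ 2 < 1) by (simpl; nra). apply inv_ge1; lra. }
  rewrite Hw.
  set (I := / (2 * INR s * p)).
  assert (HI : 0 < I) by (unfold I; apply Rinv_0_lt_compat; lra).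
  replace (1 / (2 * INR s * p)) with I by (unfold I; field; lra).
  assert (Hp1 : 1 / (2 * (1 + p)) <= 1 / 2).
  { unfold Rdiv. rewrite !Rmult_1_l. apply Rinv_le_contravar; lra. }
  assert (Sab : y ^ 2 * K * (1 / (2 * (1 + p)) - I) - 2 * y <= E ^ 2 * K / 2 - E ^ 2 * I - 2 * E).
  { assert (A1 : y ^ 2 * K * (1 / (2 * (1 + p))) <= y ^ 2 * K / 2).
    { assert (0 <= y ^ 2 * K) by (apply Rmult_le_pos; [apply pow2_ge_0|lra]).
      unfold Rdiv at 2. rewrite <- Rmult_1_l with (r := / 2) at 1. nra. }
    assert (A2 : - (y ^ 2 * K * I) <= - (y ^ 2 * I)).
    { assert (0 <= y ^ 2 * I) by (apply Rmult_le_pos; [apply pow2_ge_0|lra]). nra. }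
    assert (A3 : (y ^ 2 * (K / 2 - I) - 2 * y) - (E ^ 2 * (K / 2 - I) - 2 * E)
                 = (y - E) * ((y + E) * (K / 2 - I) - 2)) by ring.
    assert (A4 : (y + E) * (K / 2 - I) - 2 <= 0).
    { assert ((y + E) * K / 2 <= K * y) by nra. nra. }
    assert (A5 : (y - E) * ((y + E) * (K / 2 - I) - 2) <= 0).
    { apply Rmult_le_0_r; lra. }
    assert (A6 : E ^ 2 * (K / 2 - I) - 2 * E = E ^ 2 * K / 2 - E ^ 2 * I - 2 * E) by field.
    nra. }
  assert (Hq : 1 / (2 * (1 - p)) = (1 + t) / 2) by (unfold t; field; lra).
  assert (HIu : I = (1 + t) / (2 * u)) by (unfold I, u, t; field; lra).
  rewrite Hq.
  assert (A0 := HP2 u ltac:(lra)). assert (A1 := HP2b u ltac:(lra)).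
  fold E in A0, A1. unfold P2f, P2bf in *.
  assert (Hl := lin_endpoints u t (- (E ^ 2 * (1 - u) + 4 * u * E + 1785 / 10000 * u - 1))
     (- (E ^ 2 + 4 * u * E - 1 - 8215 / 10000 * u + 6114 / 10000 * u ^ 2) - 1 / 15000 * u ^ 2)
     ltac:(lra) ltac:(lra) ltac:(lra) ltac:(nra)).
  assert (Key : (1 + t) / 2 + I + (E ^ 2 * K / 2 - E ^ 2 * I - 2 * E) - (58925 / 100000 + 9724 / 10000 * t)
     <= ((u - t) / u * (- (E ^ 2 * (1 - u) + 4 * u * E + 1785 / 10000 * u - 1))
        + t / u * (- (E ^ 2 + 4 * u * E - 1 - 8215 / 10000 * u + 6114 / 10000 * u ^ 2) - 1 / 15000 * u ^ 2)) / (2 * u)).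
  { rewrite HIu.
    assert (EKb : E ^ 2 * K / 2 <= E ^ 2 / 2 + t / 6) by lra.
    match goal with |- ?L <= ?R => assert (R - L >= (E ^ 2 / 2 + t / 6) - E ^ 2 * K / 2) end.
    { apply Req_ge. field. lra. }
    lra. }
  assert (Hdiv : ((u - t) / u * (- (E ^ 2 * (1 - u) + 4 * u * E + 1785 / 10000 * u - 1))
        + t / u * (- (E ^ 2 + 4 * u * E - 1 - 8215 / 10000 * u + 6114 / 10000 * u ^ 2) - 1 / 15000 * u ^ 2)) / (2 * u) <= 0).
  { unfold Rdiv at 3. assert (0 < / (2 * u)) by (apply Rinv_0_lt_compat; lra). nra. }
  lra.
Qed.

Definition Dp : positive := 4294967296%positive.
Definition rd (x : Q) : Q := Qmake (Qfloor (x * inject_Z (Zpos Dp))) Dp.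

Lemma Q2R_inject z : Q2R (inject_Z z) = IZR z.
Proof. unfold Q2R, inject_Z. simpl. field. Qed.

Lemma Q2R_make z p : Q2R (Qmake z p) = IZR z / IZR (Zpos p).
Proof. reflexivity. Qed.

Lemma rd_le x : Q2R (rd x) <= Q2R x.
Proof.
  unfold rd. rewrite Q2R_make.
  assert (H := Qle_Rle _ _ (Qfloor_le (x * inject_Z (Zpos Dp)))).
  rewrite Q2R_inject, Q2R_mult, Q2R_inject in H.
  assert (0 < IZR (Zpos Dp)) by (apply IZR_lt; reflexivity).
  apply Rmult_le_reg_r with (IZR (Zpos Dp)); [lra|].
  unfold Rdiv. rewrite Rmult_assoc, Rinv_l by lra. lra.
Qed.

Fixpoint evalp (l : list R) (v : R) : R :=
  match l with nil => 0 | c :: l' => c + v * evalp l' v end.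

Definition Qmin0 (x : Q) : Q := if Qle_bool 0 x then 0 else x.

Fixpoint lbH (l : list Q) (h : Q) : Q :=
  match l with nil => 0 | c :: l' => c + Qmin0 (h * lbH l' h) end.

Lemma Qmin0_le v h x : 0 <= v <= Q2R h -> Q2R (Qmin0 (h * x)) <= v * Q2R x.
Proof.
  intros Hv. unfold Qmin0. destruct (Qle_bool 0 (h * x)) eqn:E.
  - apply Qle_bool_iff, Qle_Rle in E. rewrite Q2R_mult in E.
    replace (Q2R 0) with 0 in * by (unfold Q2R; simpl; field).
    destruct (Rle_dec 0 (Q2R x)) as [Hx|Hx]; [nra|].
    assert (Q2R h <= 0) by nra. assert (v = 0) by lra. subst v. lra.
  - rewrite Q2R_mult.
    assert (~ (0 <= h * x)%Q) by (intro H; apply Qle_bool_iff in H; congruence).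
    assert (Q2R (h * x) < 0).
    { apply Rnot_le_lt. intro H'. apply H. apply Rle_Qle.
      replace (Q2R 0) with 0 by (unfold Q2R; simpl; field). exact H'. }
    rewrite Q2R_mult in H0.
    assert (Q2R x < 0) by nra. nra.
Qed.

Lemma evalp_lb l h v : 0 <= v <= Q2R h -> Q2R (lbH l h) <= evalp (map Q2R l) v.
Proof.
  intros Hv. induction l as [|c l IH]; simpl.
  - unfold Q2R; simpl. lra.
  - rewrite Q2R_plus. assert (H := Qmin0_le v h (lbH l h) Hv).
    assert (0 <= v) by lra. nra.
Qed.

Definition okpoly (l : list Q) (h : Q) : bool :=
  Qle_bool 0 (lbH l h) ||
  match l with c :: l' => Qle_bool 0 c && Qle_bool 0 (lbH l' h) | nil => true end.


Lemma Q2R_0' : Q2R 0 = 0.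
Proof. unfold Q2R; simpl; field. Qed.

Lemma okpoly_sound l h v : okpoly l h = true -> 0 <= v <= Q2R h -> 0 <= evalp (map Q2R l) v.
Proof.
  intros Hok Hv. unfold okpoly in Hok. apply orb_true_iff in Hok as [H|H].
  - apply Qle_bool_iff, Qle_Rle in H. rewrite Q2R_0' in H. eapply Rle_trans; [exact H|].
    apply evalp_lb; exact Hv.
  - destruct l as [|c l]; simpl; [lra|].
    apply andb_true_iff in H as [H1 H2].
    apply Qle_bool_iff, Qle_Rle in H1. apply Qle_bool_iff, Qle_Rle in H2. rewrite Q2R_0' in *.
    assert (H3 := evalp_lb l h v Hv). assert (0 <= v) by lra. nra.
Qed.

Lemma div_nonneg a b : 0 <= a -> 0 < b -> 0 <= a / b.
Proof. intros. unfold Rdiv. apply Rmult_le_pos; [auto|left; apply Rinv_0_lt_compat; auto]. Qed.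

Lemma rd_nonneg x : 0 <= Q2R x -> 0 <= Q2R (rd x).
Proof.
  intros H. unfold rd. rewrite Q2R_make.
  apply div_nonneg; [|apply IZR_lt; reflexivity].
  apply IZR_le.
  assert (H1 : (0 <= x * inject_Z (Zpos Dp))%Q).
  { apply Rle_Qle. rewrite Q2R_mult, Q2R_inject. replace (Q2R 0) with 0 by (unfold Q2R; simpl; field).
    apply Rmult_le_pos; [exact H|apply IZR_le; discriminate]. }
  apply Qfloor_resp_le in H1. simpl in H1. exact H1.
Qed.

Fixpoint pw (m : nat) : positive := match m with O => 1%positive | S m' => xO (pw m') end.

Lemma IZR_pw m : IZR (Zpos (pw m)) = 2 ^ m.
Proof.
  induction m as [|m IH]; [reflexivity|].
  simpl pw. rewrite Pos2Z.inj_xO, mult_IZR, IH. simpl. ring.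
Qed.

Lemma pow2_pos m : 0 < 2 ^ m.
Proof. apply pow_lt. lra. Qed.

Definition sq (x : Q) : Q := rd (x * x).

Lemma sq_iter k x c : 0 <= Q2R x <= exp (- c) ->
  0 <= Q2R (Nat.iter k sq x) <= exp (- (2 ^ k * c)).
Proof.
  intros Hx. induction k as [|k IH].
  - simpl. replace (1 * c) with c by ring. exact Hx.
  - simpl Nat.iter. set (y := Nat.iter k sq x) in *.
    unfold sq. split.
    + apply rd_nonneg. rewrite Q2R_mult. nra.
    + eapply Rle_trans; [apply rd_le|]. rewrite Q2R_mult.
      replace (- (2 ^ S k * c)) with (- (2 ^ k * c) + - (2 ^ k * c)) by (simpl; ring).
      rewrite exp_plus. apply Rmult_le_compat; lra.
Qed.

Definition x0q (m : nat) : Q := Qmake (Zpos (pw (m + 10)) - 1) (pw (m + 10)).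

Lemma x0q_ok m : 0 <= Q2R (x0q m) <= exp (- (1 / 2 ^ (m + 10))).
Proof.
  unfold x0q. rewrite Q2R_make, minus_IZR, IZR_pw.
  assert (H := pow2_pos (m + 10)).
  assert (H1 : 1 <= 2 ^ (m + 10)) by (apply pow_R1_Rle; lra).
  split.
  - apply div_nonneg; lra.
  - assert (H2 := exp_ineq1_le (- (1 / 2 ^ (m + 10)))).
    replace ((2 ^ (m + 10) - 1) / 2 ^ (m + 10)) with (1 + - (1 / 2 ^ (m + 10))) by (field; lra).
    exact H2.
Qed.

Lemma T_ok m T : T = Nat.iter 10 sq (x0q m) -> 0 <= Q2R T <= exp (- (1 / 2 ^ m)).
Proof.
  intros ->. assert (H := sq_iter 10 _ _ (x0q_ok m)).
  replace (2 ^ 10 * (1 / 2 ^ (m + 10))) with (1 / 2 ^ m) in H; [exact H|].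
  rewrite pow_add. field. apply pow_nonzero; lra.
Qed.

Definition hq (m : nat) : Q := Qmake 1 (pw m).

Lemma Q2R_hq m : Q2R (hq m) = 1 / 2 ^ m.
Proof. unfold hq. rewrite Q2R_make, IZR_pw. reflexivity. Qed.

Lemma Q2R_0 : Q2R 0 = 0.
Proof. unfold Q2R; simpl; field. Qed.

Fixpoint chk (cf : Q -> Q -> list Q) (m : nat) (T : Q) (fuel i : nat) (L : Q) : bool :=
  match fuel with
  | O => true
  | S f => Qle_bool 0 L && okpoly (cf (Qmake (Z.of_nat i) (pw m)) L) (hq m) && chk cf m T f (S i) (rd (L * T))
  end.

Lemma Q2R_idx i m : Q2R (Qmake (Z.of_nat i) (pw m)) = INR i / 2 ^ m.
Proof. rewrite Q2R_make, <- INR_IZR_INZ, IZR_pw. reflexivity. Qed.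

Lemma exp_le1 u : 0 <= u -> exp (- u) <= 1.
Proof.
  intros Hu. rewrite exp_Ropp. apply inv_le1. assert (H := exp_ineq1_le u). lra.
Qed.

Lemma chk_sound (P : R -> R -> R) (cf : Q -> Q -> list Q)
  (Hcf : forall a L v, P (Q2R a + v) (Q2R L * (1 - v)) = evalp (map Q2R (cf a L)) v)
  (Hmono : forall u E E', 0 <= u -> 0 <= E' <= E -> E <= 1 -> P u E' <= P u E)
  (m : nat) (T : Q) (HT : 0 <= Q2R T <= exp (- (1 / 2 ^ m))) :
  forall fuel i L, (0 < fuel)%nat -> chk cf m T fuel i L = true -> Q2R L <= exp (- (INR i / 2 ^ m)) ->
  forall u, INR i / 2 ^ m <= u <= INR (i + fuel) / 2 ^ m -> 0 <= P u (exp (- u)).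
Proof.
  assert (Hm := pow2_pos m).
  assert (Hm1 : 1 <= 2 ^ m) by (apply pow_R1_Rle; lra).
  assert (Hh : 1 / 2 ^ m <= 1).
  { apply Rmult_le_reg_r with (2 ^ m); [lra|]. unfold Rdiv. rewrite Rmult_assoc, Rinv_l by lra. lra. }
  induction fuel as [|f IH]; intros i L Hf Hc HL u Hu.
  - lia.
  - simpl in Hc. apply andb_true_iff in Hc as [Hc Hrec]. apply andb_true_iff in Hc as [HL0 Hok].
    apply Qle_bool_iff, Qle_Rle in HL0. rewrite Q2R_0 in HL0.
    assert (Hi0 : 0 <= INR i) by apply pos_INR.
    assert (Hi1 : 0 <= INR i / 2 ^ m) by (apply div_nonneg; lra).
    assert (Hstep : INR (S i) / 2 ^ m = INR i / 2 ^ m + 1 / 2 ^ m) by (rewrite S_INR; field; lra).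
    destruct (Rle_dec u (INR (S i) / 2 ^ m)) as [Hle|Hgt].
    + set (v := u - INR i / 2 ^ m).
      assert (Hv : 0 <= v <= Q2R (hq m)) by (rewrite Q2R_hq; unfold v; lra).
      rewrite Q2R_hq in Hv.
      assert (HE1 : Q2R L * (1 - v) <= exp (- u)).
      { replace (- u) with (- (INR i / 2 ^ m) + - v) by (unfold v; ring). rewrite exp_plus.
        assert (H1 := exp_ineq1_le (- v)). assert (0 <= 1 - v) by lra.
        apply Rmult_le_compat; lra. }
      assert (HE0 : 0 <= Q2R L * (1 - v)) by (apply Rmult_le_pos; lra).
      assert (HE2 : exp (- u) <= 1) by (apply exp_le1; lra).
      eapply Rle_trans; [|apply Hmono; [lra| split; [exact HE0|exact HE1]|exact HE2]].
      replace u with (Q2R (Qmake (Z.of_nat i) (pw m)) + v) by (rewrite Q2R_idx; unfold v; ring).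
      rewrite Hcf. apply okpoly_sound with (hq m); auto. rewrite Q2R_hq. lra.
    + destruct f as [|f']; [rewrite Nat.add_1_r in Hu; lra|].
      apply (IH (S i) (rd (L * T))); [lia|exact Hrec| |].
      * eapply Rle_trans; [apply rd_le|]. rewrite Q2R_mult.
        rewrite Hstep. replace (- (INR i / 2 ^ m + 1 / 2 ^ m)) with (- (INR i / 2 ^ m) + - (1 / 2 ^ m)) by ring.
        rewrite exp_plus. apply Rmult_le_compat; lra.
      * rewrite Hstep. replace (S i + S f')%nat with (i + S (S f'))%nat by lia.
        rewrite <- Hstep. lra.
Qed.

Definition cf1 (a L : Q) : list Q :=
  ((L * (1 + 2 * a) - 1 + (21829 # 100000) * a)%Q ::
   (L * (1 - 2 * a) + (21829 # 100000))%Q :: (- (2 * L))%Q :: nil).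

Ltac q2r := repeat (rewrite ?Q2R_plus, ?Q2R_mult, ?Q2R_minus, ?Q2R_opp); rewrite ?Q2R_make.

Lemma cf1_ok a L v : P1f (Q2R a + v) (Q2R L * (1 - v)) = evalp (map Q2R (cf1 a L)) v.
Proof.
  unfold P1f, cf1. simpl map. simpl evalp.
  q2r. field.
Qed.

Definition cf1b (a L : Q) : list Q :=
  ((L * (1 + 3 * a) - 1 - (78171 # 100000) * a + (6066 # 10000) * a * a)%Q ::
   (L * (2 - 3 * a) - (78171 # 100000) + 2 * (6066 # 10000) * a)%Q ::
   (- (3 * L) + (6066 # 10000))%Q :: nil).

Lemma cf1b_ok a L v : P1bf (Q2R a + v) (Q2R L * (1 - v)) = evalp (map Q2R (cf1b a L)) v.
Proof. unfold P1bf, cf1b. simpl map. simpl evalp. q2r. field. Qed.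

Definition cf2 (a L : Q) : list Q :=
  ((L * L * (1 - a) + 4 * L * a + (1785 # 10000) * a - 1)%Q ::
   (L * L * (2 * a - 3) + 4 * L * (1 - a) + (1785 # 10000))%Q ::
   (L * L * (3 - a) - 4 * L)%Q :: (- (L * L))%Q :: nil).

Lemma cf2_ok a L v : P2f (Q2R a + v) (Q2R L * (1 - v)) = evalp (map Q2R (cf2 a L)) v.
Proof. unfold P2f, cf2. simpl map. simpl evalp. q2r. field. Qed.

Definition cf2b (a L : Q) : list Q :=
  ((L * L + 4 * L * a - 1 - (8215 # 10000) * a + (6114 # 10000) * a * a)%Q ::
   (- (2 * L * L) + 4 * L * (1 - a) - (8215 # 10000) + 2 * (6114 # 10000) * a)%Q ::
   (L * L - 4 * L + (6114 # 10000))%Q :: nil).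

Lemma cf2b_ok a L v : P2bf (Q2R a + v) (Q2R L * (1 - v)) = evalp (map Q2R (cf2b a L)) v.
Proof. unfold P2bf, cf2b. simpl map. simpl evalp. q2r. field. Qed.

Lemma mono1 u E E' : 0 <= u -> 0 <= E' <= E -> E <= 1 -> P1f u E' <= P1f u E.
Proof. intros. unfold P1f. nra. Qed.
Lemma mono1b u E E' : 0 <= u -> 0 <= E' <= E -> E <= 1 -> P1bf u E' <= P1bf u E.
Proof. intros. unfold P1bf. nra. Qed.
Lemma mono2 u E E' : 0 <= u -> 0 <= E' <= E -> E <= 1 -> P2f u E' <= P2f u E.
Proof.
  intros Hu HE HE1. unfold P2f.
  assert (H : P2f u E - P2f u E' = (E - E') * ((E + E') * (1 - u) + 4 * u)) by (unfold P2f; ring).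
  unfold P2f in H.
  assert (0 <= (E + E') * (1 - u) + 4 * u).
  { destruct (Rle_dec u 1); [nra|]. nra. }
  assert (0 <= (E - E') * ((E + E') * (1 - u) + 4 * u)) by (apply Rmult_le_pos; lra).
  lra.
Qed.
Lemma mono2b u E E' : 0 <= u -> 0 <= E' <= E -> E <= 1 -> P2bf u E' <= P2bf u E.
Proof. intros. unfold P2bf. nra. Qed.

Definition T4 : Q := Qmake 4034740278 Dp.
Definition T5 : Q := Qmake 4162822604 Dp.
Definition T6 : Q := Qmake 4228379013 Dp.
Lemma T4_eq : T4 = Nat.iter 10 sq (x0q 4). Proof. reflexivity. Qed.
Lemma T5_eq : T5 = Nat.iter 10 sq (x0q 5). Proof. reflexivity. Qed.
Lemma T6_eq : T6 = Nat.iter 10 sq (x0q 6). Proof. reflexivity. Qed.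

Lemma run1 : chk cf1 6 T6 295 0 1 = true. Proof. vm_compute. reflexivity. Qed.
Lemma run1b : chk cf1b 4 T4 40 0 1 = true. Proof. vm_compute. reflexivity. Qed.
Lemma run2 : chk cf2 5 T5 192 0 1 = true. Proof. vm_compute. reflexivity. Qed.
Lemma run2b : chk cf2b 4 T4 40 0 1 = true. Proof. vm_compute. reflexivity. Qed.

Lemma Q2R_1 : Q2R 1 = 1.
Proof. unfold Q2R; simpl; field. Qed.

Lemma INR_big n : INR n = IZR (Z.of_nat n).
Proof. apply INR_IZR_INZ. Qed.

Lemma start_ok m : Q2R 1 <= exp (- (INR 0 / 2 ^ m)).
Proof. rewrite Q2R_1. simpl INR. replace (- (0 / 2 ^ m)) with 0 by (field; apply pow_nonzero; lra). rewrite exp_0. lra. Qed.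

Lemma HP1 u : 0 < u -> 0 <= P1f u (exp (- u)).
Proof.
  intros Hu. destruct (Rle_dec u (46 / 10)) as [H|H].
  - apply (chk_sound P1f cf1 cf1_ok mono1 6 T6 (T_ok 6 T6 T6_eq) 295 0 1); [lia|exact run1|apply start_ok|].
    rewrite Nat.add_0_l, INR_big. simpl INR. simpl Z.of_nat. simpl pow. lra.
  - unfold P1f. assert (0 < exp (- u)) by apply exp_pos. nra.
Qed.

Lemma HP1b u : 0 < u -> 0 <= P1bf u (exp (- u)).
Proof.
  intros Hu. destruct (Rle_dec u (25 / 10)) as [H|H].
  - apply (chk_sound P1bf cf1b cf1b_ok mono1b 4 T4 (T_ok 4 T4 T4_eq) 40 0 1); [lia|exact run1b|apply start_ok|].
    rewrite Nat.add_0_l, INR_big. simpl INR. simpl Z.of_nat. simpl pow. lra.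
  - unfold P1bf. assert (0 < exp (- u)) by apply exp_pos. nra.
Qed.

Lemma HP2 u : 0 < u -> 0 <= P2f u (exp (- u)).
Proof.
  intros Hu. destruct (Rle_dec u 6) as [H|H].
  - apply (chk_sound P2f cf2 cf2_ok mono2 5 T5 (T_ok 5 T5 T5_eq) 192 0 1); [lia|exact run2|apply start_ok|].
    rewrite Nat.add_0_l, INR_big. simpl INR. simpl Z.of_nat. simpl pow. lra.
  - unfold P2f. assert (0 < exp (- u)) by apply exp_pos.
    assert (exp (- u) <= 1) by (apply exp_le1; lra).
    set (E := exp (- u)) in *.
    assert (0 <= u * E * (4 - E)) by (apply Rmult_le_pos; [apply Rmult_le_pos|]; lra).
    assert (0 <= E ^ 2) by apply pow2_ge_0.
    assert (E ^ 2 * (1 - u) + 4 * u * E = E ^ 2 + u * E * (4 - E)) by ring.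
    lra.
Qed.

Lemma HP2b u : 0 < u -> 0 <= P2bf u (exp (- u)).
Proof.
  intros Hu. destruct (Rle_dec u (25 / 10)) as [H|H].
  - apply (chk_sound P2bf cf2b cf2b_ok mono2b 4 T4 (T_ok 4 T4 T4_eq) 40 0 1); [lia|exact run2b|apply start_ok|].
    rewrite Nat.add_0_l, INR_big. simpl INR. simpl Z.of_nat. simpl pow. lra.
  - unfold P2bf. assert (0 < exp (- u)) by apply exp_pos. nra.
Qed.

Fixpoint psum (c : nat -> R) (k : nat) : R :=
  match k with O => 0 | S k' => psum c k' + c k' end.

Lemma psum_sfr c N : sum_f_R0 c N = psum c (S N).
Proof. induction N as [|N IH]; simpl; [ring|]. simpl in IH. rewrite IH. reflexivity. Qed.

Lemma psum_shift c K m : psum c (K + m) = psum c K + psum (fun j => c (K + j)%nat) m.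
Proof.
  induction m as [|m IH].
  - rewrite Nat.add_0_r. simpl. ring.
  - rewrite Nat.add_succ_r. simpl. rewrite IH. ring.
Qed.

Lemma psum_mono c N M : (forall n, 0 <= c n) -> (N <= M)%nat -> psum c N <= psum c M.
Proof.
  intros Hc H. induction H as [|M H IH]; [lra|]. simpl. specialize (Hc M). lra.
Qed.

Lemma gen_bound (c a : nat -> R) (K : nat) (rho U T : R) :
  (forall k, 0 <= c k) -> (forall k, c k <= a k) ->
  (forall k, (K < k)%nat -> a (S k) <= rho * a k) -> 0 <= rho < 1 ->
  psum c (S K) <= U -> a (S K) <= T * (1 - rho) ->
  forall N, psum c N <= U + T.
Proof.
  intros Hc Hca Hr Hrho HU HT N.
  assert (Ha : forall k, 0 <= a k) by (intros k; specialize (Hc k); specialize (Hca k); lra).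
  assert (HT0 : 0 <= T).
  { destruct (Rle_dec 0 T); auto. specialize (Ha (S K)). nra. }
  destruct (le_lt_dec N (S K)) as [H|H].
  - assert (psum c N <= psum c (S K)) by (apply psum_mono; auto). lra.
  - replace N with (S K + (N - S K))%nat by lia.
    rewrite psum_shift.
    assert (Inv : forall m, psum (fun j => a (S K + j)%nat) m + a (S K + m)%nat / (1 - rho) <= a (S K) / (1 - rho)).
    { induction m as [|m IH].
      - rewrite Nat.add_0_r. simpl. lra.
      - cbn [psum]. rewrite Nat.add_succ_r.
        assert (Hs := Hr (S K + m)%nat ltac:(lia)).
        assert (E : a (S (S K + m)) / (1 - rho) - a (S K + m)%nat / (1 - rho) + a (S K + m)%nat
                    = (a (S (S K + m)) - rho * a (S K + m)%nat) / (1 - rho)) by (field; lra).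
        assert ((a (S (S K + m)) - rho * a (S K + m)%nat) / (1 - rho) <= 0).
        { unfold Rdiv. rewrite Rmult_comm. apply Rmult_le_0_r; [left; apply Rinv_0_lt_compat; lra|]. lra. }
        lra. }
    assert (Hle : forall m, psum (fun j => c (S K + j)%nat) m <= psum (fun j => a (S K + j)%nat) m).
    { induction m as [|m IH]; cbn [psum]; [lra|]. specialize (Hca (S K + m)%nat). lra. }
    specialize (Inv (N - S K)%nat). specialize (Hle (N - S K)%nat).
    assert (0 <= a (S K + (N - S K))%nat / (1 - rho)) by (apply Rdiv_le_0_compat; [apply Ha|lra]).
    assert (a (S K) / (1 - rho) <= T).
    { apply Rmult_le_reg_r with (1 - rho); [lra|]. unfold Rdiv. rewrite Rmult_assoc, Rinv_l by lra. lra. }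
    lra.
Qed.

Definition Dz : Z := 1125899906842624%Z.
Definition cdiv (x y : Z) : Z := ((x + y - 1) / y)%Z.

Lemma cdiv_ge x y : (0 < y)%Z -> IZR x / IZR y <= IZR (cdiv x y).
Proof.
  intros Hy. unfold cdiv.
  assert (H1 := Z.div_mod (x + y - 1) y ltac:(lia)).
  assert (H2 := Z.mod_pos_bound (x + y - 1) y Hy).
  assert (H3 : (x <= y * ((x + y - 1) / y))%Z) by lia.
  apply IZR_le in H3. rewrite mult_IZR in H3.
  assert (0 < IZR y) by (apply IZR_lt; lia).
  apply Rmult_le_reg_r with (IZR y); [lra|].
  unfold Rdiv. rewrite Rmult_assoc, Rinv_l by lra. lra.
Qed.

Definition A0 (n s : nat) : Z :=
  cdiv (Dz * (Z.of_nat n - 1) ^ (Z.of_nat s) * (Z.of_nat n) ^ 2) ((Z.of_nat n) ^ (Z.of_nat s)).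

Definition cond (J : nat -> bool) (k : nat) : bool := ((1 <=? k)%nat && negb (J k))%bool.

Definition contrib (J : nat -> bool) (s k : nat) (A : Z) : Z :=
  if cond J k then cdiv (A * (Z.of_nat k) ^ 2) ((Z.of_nat (k + s)) ^ 2) else 0%Z.

Fixpoint st (n s : nat) (J : nat -> bool) (k : nat) : Z * Z :=
  match k with
  | O => (A0 n s, 0%Z)
  | S k' => let '(A, Sm) := st n s J k' in
            (cdiv (A * Z.of_nat (S k' + s)) (Z.of_nat (S k') * Z.of_nat n), (Sm + contrib J s k' A)%Z)
  end.

Lemma st_S n s J k : st n s J (S k) =
  let '(A, Sm) := st n s J k in
  (cdiv (A * Z.of_nat (S k + s)) (Z.of_nat (S k) * Z.of_nat n), (Sm + contrib J s k A)%Z).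
Proof. reflexivity. Qed.

Lemma IZR_pow z k : IZR (z ^ Z.of_nat k) = IZR z ^ k.
Proof. rewrite pow_IZR. reflexivity. Qed.

Lemma IZR_sq z : IZR (z ^ 2) = IZR z ^ 2.
Proof. replace (z ^ 2)%Z with (z * z)%Z by ring. rewrite mult_IZR. ring. Qed.

Lemma st_inv n s J : (2 <= n)%nat ->
  let p := 1 / INR n in
  let f := (1 - p) ^ s / p ^ 2 in
  let a := fun k => f * (nb s k * p ^ k) in
  let c := fun k => f * hterm J s p k in
  forall k, a k <= IZR (fst (st n s J k)) / IZR Dz /\ psum c k <= IZR (snd (st n s J k)) / IZR Dz.
Proof.
  intros Hn p f a c.
  assert (HD : 0 < IZR Dz) by (apply IZR_lt; reflexivity).
  assert (Hn0 : 2 <= INR n) by (apply (le_INR 2); lia).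
  assert (Hp : 0 < p < 1).
  { unfold p. split; [apply Rdiv_lt_0_compat; lra|].
    apply Rmult_lt_reg_r with (INR n); [lra|]. unfold Rdiv. rewrite Rmult_assoc, Rinv_l by lra. lra. }
  assert (Hf : 0 < f) by (unfold f; apply Rdiv_lt_0_compat; apply pow_lt; lra).
  induction k as [|k IH].
  - simpl fst. simpl snd. split.
    + replace (a 0%nat) with f by (unfold a; simpl; ring).
      unfold A0. eapply Rle_trans; [|apply Rmult_le_compat_r;
        [left; apply Rinv_0_lt_compat; exact HD|apply cdiv_ge; apply Z.pow_pos_nonneg; lia]].
      change (Z.of_nat n ^ 2)%Z with (Z.of_nat n ^ Z.of_nat 2)%Z.
      rewrite !mult_IZR, !IZR_pow, minus_IZR, <- INR_IZR_INZ.
      unfold f, p. right.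
      replace (1 - 1 / INR n) with ((INR n - 1) * / INR n) by (field; lra).
      rewrite Rpow_mult_distr, pow_inv.
      assert (0 < INR n ^ s) by (apply pow_lt; lra).
      simpl pow. field. lra.
    + simpl. unfold Rdiv. rewrite Rmult_0_l. lra.
  - rewrite st_S. destruct (st n s J k) as [A Sm] eqn:Est. cbn [fst snd] in *.
    destruct IH as [IHa IHc].
    assert (HSk : 0 < INR (S k)) by (apply lt_0_INR; lia).
    assert (Hnb : nb s (S k) * p ^ (S k) = nb s k * p ^ k * (INR (S k + s) / (INR (S k) * INR n))).
    { rewrite nb_S. unfold p. simpl pow. field. lra. }
    split.
    + unfold a. rewrite Hnb.
      eapply Rle_trans; [|apply Rmult_le_compat_r;
        [left; apply Rinv_0_lt_compat; exact HD|apply cdiv_ge; apply Z.mul_pos_pos; lia]].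
      rewrite !mult_IZR, <- !INR_IZR_INZ.
      assert (0 <= INR (S k + s) / (INR (S k) * INR n)) by (apply Rdiv_le_0_compat; [apply pos_INR|nra]).
      replace (f * (nb s k * p ^ k * (INR (S k + s) / (INR (S k) * INR n))))
        with (a k * (INR (S k + s) / (INR (S k) * INR n))) by (unfold a; ring).
      replace (IZR A * INR (S k + s) / (INR (S k) * INR n) * / IZR Dz)
        with (IZR A / IZR Dz * (INR (S k + s) / (INR (S k) * INR n))) by (field; nra).
      exact (Rmult_le_compat_r (INR (S k + s) / (INR (S k) * INR n)) (a k) (IZR A / IZR Dz) H IHa).
    + cbn [psum]. rewrite plus_IZR.
      assert (Hck : c k <= IZR (contrib J s k A) / IZR Dz).
      { unfold c, contrib, hterm. fold (cond J k). destruct (cond J k) eqn:Ec.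
        - unfold cond in Ec. apply andb_true_iff in Ec as [Ec _]. apply Nat.leb_le in Ec.
          eapply Rle_trans; [|apply Rmult_le_compat_r;
            [left; apply Rinv_0_lt_compat; exact HD|apply cdiv_ge; apply Z.pow_pos_nonneg; lia]].
          rewrite mult_IZR, !IZR_sq, <- !INR_IZR_INZ, nb_C.
          assert (0 < INR (k + s)) by (apply lt_0_INR; lia).
          assert (0 <= INR k ^ 2 / INR (k + s) ^ 2) by (apply Rdiv_le_0_compat; [apply pow2_ge_0|apply pow_lt; lra]).
          replace (f * (INR k ^ 2 / INR (k + s) ^ 2 * nb s k * p ^ k))
            with (INR k ^ 2 / INR (k + s) ^ 2 * a k) by (unfold a; ring).
          replace (IZR A * INR k ^ 2 / INR (k + s) ^ 2 * / IZR Dz)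
            with (INR k ^ 2 / INR (k + s) ^ 2 * (IZR A / IZR Dz)) by (field; lra).
          apply Rmult_le_compat_l; auto.
        - unfold Rdiv. rewrite Rmult_0_r, Rmult_0_l. lra. }
      unfold Rdiv in *. rewrite Rmult_plus_distr_r. lra.
Qed.

Definition Kc : nat := 60%nat.

Definition chk1 (n s : nat) (J : nat -> bool) (cnum : Z) : bool :=
  let '(A, Sm) := st n s J (S Kc) in
  let den := (Z.of_nat ((Kc + 2) * n) - Z.of_nat (Kc + 2 + s))%Z in
  ((0 <? den)%Z && ((Sm + cdiv (A * Z.of_nat ((Kc + 2) * n)) den) * 10000 <=? cnum * Dz)%Z)%bool.

Lemma psum_scal f x k : psum (fun j => f * x j) k = f * psum x k.
Proof. induction k as [|k IH]; simpl; [ring|]. rewrite IH. ring. Qed.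

Lemma chk1_sound n s J cnum : (2 <= n)%nat -> chk1 n s J cnum = true ->
  h J s (1 / INR n) <= IZR cnum / 10000.
Proof.
  intros Hn Hc.
  assert (Hinv := st_inv n s J Hn). cbv zeta in Hinv.
  set (p := 1 / INR n) in *.
  set (f := (1 - p) ^ s / p ^ 2) in *.
  set (a := fun k => f * (nb s k * p ^ k)) in *.
  set (c := fun k => f * hterm J s p k) in *.
  assert (HD : 0 < IZR Dz) by (apply IZR_lt; reflexivity).
  assert (Hn0 : 2 <= INR n) by (apply (le_INR 2); lia).
  assert (Hp : 0 < p < 1).
  { unfold p. split; [apply Rdiv_lt_0_compat; lra|].
    apply Rmult_lt_reg_r with (INR n); [lra|]. unfold Rdiv. rewrite Rmult_assoc, Rinv_l by lra. lra. }
  assert (Hf : 0 < f) by (unfold f; apply Rdiv_lt_0_compat; apply pow_lt; lra).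
  unfold chk1 in Hc. destruct (st n s J (S Kc)) as [A Sm] eqn:Est.
  specialize (Hinv (S Kc)). rewrite Est in Hinv. cbn [fst snd] in Hinv. destruct Hinv as [HA HS].
  apply andb_true_iff in Hc as [Hden Hfin].
  apply Z.ltb_lt in Hden. apply Z.leb_le in Hfin.
  set (den := (Z.of_nat ((Kc + 2) * n) - Z.of_nat (Kc + 2 + s))%Z) in *.
  set (Tz := cdiv (A * Z.of_nat ((Kc + 2) * n)) den) in *.
  assert (Hlt : (Kc + 2 + s < (Kc + 2) * n)%nat) by lia.
  set (rho := INR (Kc + 2 + s) / INR ((Kc + 2) * n)).
  assert (HKn : 0 < INR ((Kc + 2) * n)) by (apply lt_0_INR; lia).
  assert (Hrho : 0 <= rho < 1).
  { unfold rho. split; [apply Rdiv_le_0_compat; [apply pos_INR|lra]|].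
    apply Rmult_lt_reg_r with (INR ((Kc + 2) * n)); [lra|].
    unfold Rdiv. rewrite Rmult_assoc, Rinv_l by lra. rewrite Rmult_1_l, Rmult_1_r. apply lt_INR. exact Hlt. }
  assert (Hbound : forall N, psum c N <= IZR Sm / IZR Dz + IZR Tz / IZR Dz).
  { apply (gen_bound c a Kc rho).
    - intros k. unfold c. apply Rmult_le_pos; [lra|apply hterm_nonneg; lra].
    - intros k. unfold c, a. apply Rmult_le_compat_l; [lra|].
      unfold hterm. rewrite nb_C. destruct (_ && _)%bool eqn:Ec.
      + apply andb_true_iff in Ec as [Ec _]. apply Nat.leb_le in Ec.
        assert (0 < INR (k + s)) by (apply lt_0_INR; lia).
        assert (INR k <= INR (k + s)) by (apply le_INR; lia).
        assert (0 <= INR k) by apply pos_INR.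
        assert (Hw : INR k ^ 2 / INR (k + s) ^ 2 <= 1).
        { apply Rmult_le_reg_r with (INR (k + s) ^ 2); [apply pow_lt; lra|].
          unfold Rdiv. rewrite Rmult_assoc, Rinv_l by (apply pow_nonzero; lra). nra. }
        assert (0 <= nb s k * p ^ k) by (apply Rmult_le_pos; [left; apply nb_pos|apply pow_le; lra]).
        rewrite Rmult_assoc. nra.
      + apply Rmult_le_pos; [left; apply nb_pos|apply pow_le; lra].
    - intros k Hk. unfold a.
      assert (HSk : 0 < INR (S k)) by (apply lt_0_INR; lia).
      assert (Hnb : nb s (S k) * p ^ (S k) = nb s k * p ^ k * (INR (S k + s) / (INR (S k) * INR n))).
      { rewrite nb_S. unfold p. simpl pow. field. lra. }
      rewrite Hnb.
      assert (Hr : INR (S k + s) / (INR (S k) * INR n) <= rho).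
      { unfold rho. rewrite mult_INR.
        assert (Hi : (INR (S k + s) * INR (Kc + 2) <= INR (Kc + 2 + s) * INR (S k))).
        { rewrite <- !mult_INR. apply le_INR. nia. }
        assert (0 < INR (Kc + 2)) by (apply lt_0_INR; lia).
        apply Rmult_le_reg_r with (INR (S k) * INR n * INR (Kc + 2)); [apply Rmult_lt_0_compat; [apply Rmult_lt_0_compat|]; lra|].
        replace (INR (S k + s) / (INR (S k) * INR n) * (INR (S k) * INR n * INR (Kc + 2)))
          with (INR (S k + s) * INR (Kc + 2)) by (field; lra).
        replace (INR (Kc + 2 + s) / (INR (Kc + 2) * INR n) * (INR (S k) * INR n * INR (Kc + 2)))
          with (INR (Kc + 2 + s) * INR (S k)) by (field; lra).
        exact Hi. }
      assert (0 <= f * (nb s k * p ^ k)) by (apply Rmult_le_pos; [lra|apply Rmult_le_pos; [left; apply nb_pos|apply pow_le; lra]]).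
      replace (f * (nb s k * p ^ k * (INR (S k + s) / (INR (S k) * INR n))))
        with (f * (nb s k * p ^ k) * (INR (S k + s) / (INR (S k) * INR n))) by ring.
      rewrite (Rmult_comm rho). apply Rmult_le_compat_l; auto.
    - exact Hrho.
    - exact HS.
    - eapply Rle_trans; [exact HA|].
      assert (Hden' : 0 < IZR den) by (apply IZR_lt; lia).
      assert (HT := cdiv_ge (A * Z.of_nat ((Kc + 2) * n)) den Hden). fold Tz in HT.
      rewrite mult_IZR, <- INR_IZR_INZ in HT.
      assert (Hdr : IZR den = INR ((Kc + 2) * n) * (1 - rho)).
      { unfold den, rho. rewrite minus_IZR, <- !INR_IZR_INZ. field. lra. }
      rewrite Hdr in HT.
      assert (HT2 : IZR A <= IZR Tz * (1 - rho)).
      { apply Rmult_le_reg_r with (INR ((Kc + 2) * n)); [lra|].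
        apply Rle_trans with (IZR A * INR ((Kc + 2) * n) / (INR ((Kc + 2) * n) * (1 - rho)) * (INR ((Kc + 2) * n) * (1 - rho))).
        - right. field. split; lra.
        - assert (0 <= INR ((Kc + 2) * n) * (1 - rho)) by nra.
          replace (IZR Tz * (1 - rho) * INR ((Kc + 2) * n)) with (IZR Tz * (INR ((Kc + 2) * n) * (1 - rho))) by ring.
          apply Rmult_le_compat_r; auto. }
      unfold Rdiv. assert (0 < / IZR Dz) by (apply Rinv_0_lt_compat; lra).
      replace (IZR Tz * / IZR Dz * (1 - rho)) with (IZR Tz * (1 - rho) * / IZR Dz) by ring.
      apply Rmult_le_compat_r; lra. }
  assert (Hfin' : IZR Sm / IZR Dz + IZR Tz / IZR Dz <= IZR cnum / 10000).
  { apply IZR_le in Hfin. rewrite !mult_IZR, plus_IZR in Hfin.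
    apply Rmult_le_reg_r with (IZR Dz * 10000); [lra|].
    replace ((IZR Sm / IZR Dz + IZR Tz / IZR Dz) * (IZR Dz * 10000)) with ((IZR Sm + IZR Tz) * 10000) by (field; lra).
    replace (IZR cnum / 10000 * (IZR Dz * 10000)) with (IZR cnum * IZR Dz) by (field; lra).
    exact Hfin. }
  unfold h. fold p. fold f.
  assert (HSer : Series (hterm J s p) <= (IZR cnum / 10000) / f).
  { apply Series_le_partial'; [intros; apply hterm_nonneg; lra|].
    intros N. rewrite psum_sfr.
    apply Rmult_le_reg_l with f; [lra|].
    replace (f * (IZR cnum / 10000 / f)) with (IZR cnum / 10000) by (field; lra).
    rewrite <- psum_scal. specialize (Hbound (S N)). fold c. lra. }
  apply Rmult_le_compat_l with (r := f) in HSer; [|lra].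
  replace (f * (IZR cnum / 10000 / f)) with (IZR cnum / 10000) in HSer by (field; lra).
  exact HSer.
Qed.

Definition chk_all (n : nat) (J : nat -> bool) (cnum : Z) (S0 : nat) : bool :=
  forallb (fun s => chk1 n s J cnum) (seq 1 (S0 - 1)).

Lemma chk_all_ok n J cnum S0 s : chk_all n J cnum S0 = true -> (1 <= s < S0)%nat -> chk1 n s J cnum = true.
Proof.
  intros H Hs. unfold chk_all in H. rewrite forallb_forall in H. apply H.
  apply in_seq. lia.
Qed.

Lemma large12 n s S0 : (2 <= n)%nat -> (1 <= S0)%nat -> (S0 <= s)%nat ->
  h J12 s (1 / INR n) <= INR n / (INR n - 1) + INR n / INR S0.
Proof.
  intros Hn HS0 Hs.
  assert (Hn0 : 2 <= INR n) by (apply (le_INR 2); lia).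
  assert (Hs0 : INR S0 <= INR s) by (apply le_INR; lia).
  assert (HS1 : 1 <= INR S0) by (apply (le_INR 1); lia).
  set (p := 1 / INR n).
  assert (Hp : 0 < p < 1).
  { unfold p. split; [apply Rdiv_lt_0_compat; lra|].
    apply Rmult_lt_reg_r with (INR n); [lra|]. unfold Rdiv. rewrite Rmult_assoc, Rinv_l by lra. lra. }
  eapply Rle_trans; [apply F12_bound; [lia|exact Hp]|].
  assert (Hy : 0 <= (1 - p) ^ s <= 1) by (split; [apply pow_le; lra|apply pow_le1; lra]).
  assert (Hsp : 0 < INR s * p) by nra.
  assert (H1 : (1 - (1 - p) ^ s) / (INR s * p) <= 1 / (INR s * p)).
  { unfold Rdiv. apply Rmult_le_compat_r; [left; apply Rinv_0_lt_compat; lra|lra]. }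
  assert (H2 : 1 / (1 - p) = INR n / (INR n - 1)) by (unfold p; field; lra).
  assert (H3 : 1 / (INR s * p) <= INR n / INR S0).
  { replace (1 / (INR s * p)) with (INR n / INR s) by (unfold p; field; lra).
    unfold Rdiv. apply Rmult_le_compat_l; [lra|]. apply Rinv_le_contravar; lra. }
  lra.
Qed.

Lemma largesym n s S0 : (2 <= n)%nat -> (1 <= S0)%nat -> (S0 <= s)%nat ->
  h Jsym s (1 / INR n) <= INR n / (2 * (INR n - 1)) + INR n / (2 * INR S0).
Proof.
  intros Hn HS0 Hs.
  assert (Hn0 : 2 <= INR n) by (apply (le_INR 2); lia).
  assert (Hs0 : INR S0 <= INR s) by (apply le_INR; lia).
  assert (HS1 : 1 <= INR S0) by (apply (le_INR 1); lia).
  set (p := 1 / INR n).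
  assert (Hp : 0 < p < 1).
  { unfold p. split; [apply Rdiv_lt_0_compat; lra|].
    apply Rmult_lt_reg_r with (INR n); [lra|]. unfold Rdiv. rewrite Rmult_assoc, Rinv_l by lra. lra. }
  eapply Rle_trans; [apply Fsym_bound; [lia|exact Hp]|].
  set (y := (1 - p) ^ s).
  assert (Hy : 0 <= y <= 1) by (split; [apply pow_le; lra|apply pow_le1; lra]).
  assert (Hsp : 0 < INR s * p) by nra.
  assert (Hq : 1 <= (1 + p) ^ s) by (apply pow_ge1; lra).
  set (w := y / (1 + p) ^ s).
  assert (Hw : 0 <= w <= y).
  { unfold w. split; [apply Rdiv_le_0_compat; lra|].
    unfold Rdiv. rewrite <- (Rmult_1_r y) at 2. apply Rmult_le_compat_l; [lra|]. apply inv_le1; lra. }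
  assert (Hp1 : 1 / (2 * (1 + p)) <= 1 / 2).
  { unfold Rdiv. rewrite !Rmult_1_l. apply Rinv_le_contravar; lra. }
  assert (Hi : 0 <= 1 / (2 * INR s * p)) by (apply Rdiv_le_0_compat; lra).
  assert (H0 : w * (1 / (2 * (1 + p)) - 1 / (2 * INR s * p)) <= y / 2).
  { assert (w * (1 / (2 * (1 + p))) <= w / 2) by (unfold Rdiv at 2; rewrite <- (Rmult_1_l (/ 2)); nra).
    assert (0 <= w * (1 / (2 * INR s * p))) by (apply Rmult_le_pos; lra). nra. }
  assert (H2 : 1 / (2 * (1 - p)) = INR n / (2 * (INR n - 1))) by (unfold p; field; lra).
  assert (H3 : 1 / (2 * INR s * p) <= INR n / (2 * INR S0)).
  { replace (1 / (2 * INR s * p)) with (INR n / (2 * INR s)) by (unfold p; field; lra).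
    unfold Rdiv. apply Rmult_le_compat_l; [lra|]. apply Rinv_le_contravar; lra. }
  lra.
Qed.

Lemma part3_n n cn dn S1 S2 : (2 <= n)%nat -> (1 <= S1)%nat -> (1 <= S2)%nat ->
  chk_all n J12 cn S1 = true -> chk_all n Jsym dn S2 = true ->
  INR n / (INR n - 1) + INR n / INR S1 <= IZR cn / 10000 ->
  INR n / (2 * (INR n - 1)) + INR n / (2 * INR S2) <= IZR dn / 10000 ->
  Rbar_le (CJ J12 (1 / INR n)) (Finite (IZR cn / 10000)) /\
  Rbar_le (CJ Jsym (1 / INR n)) (Finite (IZR dn / 10000)).
Proof.
  intros Hn HS1 HS2 H1 H2 H3 H4. split; apply CJ_le; intros s Hs.
  - destruct (le_lt_dec S1 s).
    + eapply Rle_trans; [apply (large12 n s S1); auto|exact H3].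
    + apply chk1_sound; auto. apply (chk_all_ok n J12 cn S1); auto.
  - destruct (le_lt_dec S2 s).
    + eapply Rle_trans; [apply (largesym n s S2); auto|exact H4].
    + apply chk1_sound; auto. apply (chk_all_ok n Jsym dn S2); auto.
Qed.



Lemma p3_2 : Rbar_le (CJ J12 (1 / INR 2)) (Finite (cval 2)) /\ Rbar_le (CJ Jsym (1 / INR 2)) (Finite (dval 2)).
Proof.
  apply (part3_n 2 21327 10570 16 18); try lia.
  - vm_compute; reflexivity.
  - vm_compute; reflexivity.
  - rewrite !INR_IZR_INZ. change (IZR (Z.of_nat 2)) with 2. change (IZR (Z.of_nat 16)) with 16. lra.
  - rewrite !INR_IZR_INZ. change (IZR (Z.of_nat 2)) with 2. change (IZR (Z.of_nat 18)) with 18. lra.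
Qed.

Lemma p3_3 : Rbar_le (CJ J12 (1 / INR 3)) (Finite (cval 3)) /\ Rbar_le (CJ Jsym (1 / INR 3)) (Finite (dval 3)).
Proof.
  apply (part3_n 3 16582 8168 19 23); try lia.
  - vm_compute; reflexivity.
  - vm_compute; reflexivity.
  - rewrite !INR_IZR_INZ. change (IZR (Z.of_nat 3)) with 3. change (IZR (Z.of_nat 19)) with 19. lra.
  - rewrite !INR_IZR_INZ. change (IZR (Z.of_nat 3)) with 3. change (IZR (Z.of_nat 23)) with 23. lra.
Qed.

Lemma p3_4 : Rbar_le (CJ J12 (1 / INR 4)) (Finite (cval 4)) /\ Rbar_le (CJ Jsym (1 / INR 4)) (Finite (dval 4)).
Proof.
  apply (part3_n 4 15043 7387 24 28); try lia.
  - vm_compute; reflexivity.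
  - vm_compute; reflexivity.
  - rewrite !INR_IZR_INZ. change (IZR (Z.of_nat 4)) with 4. change (IZR (Z.of_nat 24)) with 24. lra.
  - rewrite !INR_IZR_INZ. change (IZR (Z.of_nat 4)) with 4. change (IZR (Z.of_nat 28)) with 28. lra.
Qed.

Lemma p3_5 : Rbar_le (CJ J12 (1 / INR 5)) (Finite (cval 5)) /\ Rbar_le (CJ Jsym (1 / INR 5)) (Finite (dval 5)).
Proof.
  apply (part3_n 5 14293 7001 28 34); try lia.
  - vm_compute; reflexivity.
  - vm_compute; reflexivity.
  - rewrite !INR_IZR_INZ. change (IZR (Z.of_nat 5)) with 5. change (IZR (Z.of_nat 28)) with 28. lra.
  - rewrite !INR_IZR_INZ. change (IZR (Z.of_nat 5)) with 5. change (IZR (Z.of_nat 34)) with 34. lra.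
Qed.

Lemma p3_6 : Rbar_le (CJ J12 (1 / INR 6)) (Finite (cval 6)) /\ Rbar_le (CJ Jsym (1 / INR 6)) (Finite (dval 6)).
Proof.
  apply (part3_n 6 13851 6773 33 39); try lia.
  - vm_compute; reflexivity.
  - vm_compute; reflexivity.
  - rewrite !INR_IZR_INZ. change (IZR (Z.of_nat 6)) with 6. change (IZR (Z.of_nat 33)) with 33. lra.
  - rewrite !INR_IZR_INZ. change (IZR (Z.of_nat 6)) with 6. change (IZR (Z.of_nat 39)) with 39. lra.
Qed.

Lemma p3_7 : Rbar_le (CJ J12 (1 / INR 7)) (Finite (cval 7)) /\ Rbar_le (CJ Jsym (1 / INR 7)) (Finite (dval 7)).
Proof.
  apply (part3_n 7 13560 6622 37 45); try lia.
  - vm_compute; reflexivity.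
  - vm_compute; reflexivity.
  - rewrite !INR_IZR_INZ. change (IZR (Z.of_nat 7)) with 7. change (IZR (Z.of_nat 37)) with 37. lra.
  - rewrite !INR_IZR_INZ. change (IZR (Z.of_nat 7)) with 7. change (IZR (Z.of_nat 45)) with 45. lra.
Qed.

Lemma p3_8 : Rbar_le (CJ J12 (1 / INR 8)) (Finite (cval 8)) /\ Rbar_le (CJ Jsym (1 / INR 8)) (Finite (dval 8)).
Proof.
  apply (part3_n 8 13354 6515 42 50); try lia.
  - vm_compute; reflexivity.
  - vm_compute; reflexivity.
  - rewrite !INR_IZR_INZ. change (IZR (Z.of_nat 8)) with 8. change (IZR (Z.of_nat 42)) with 42. lra.
  - rewrite !INR_IZR_INZ. change (IZR (Z.of_nat 8)) with 8. change (IZR (Z.of_nat 50)) with 50. lra.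
Qed.

Lemma p3_9 : Rbar_le (CJ J12 (1 / INR 9)) (Finite (cval 9)) /\ Rbar_le (CJ Jsym (1 / INR 9)) (Finite (dval 9)).
Proof.
  apply (part3_n 9 13202 6436 47 56); try lia.
  - vm_compute; reflexivity.
  - vm_compute; reflexivity.
  - rewrite !INR_IZR_INZ. change (IZR (Z.of_nat 9)) with 9. change (IZR (Z.of_nat 47)) with 47. lra.
  - rewrite !INR_IZR_INZ. change (IZR (Z.of_nat 9)) with 9. change (IZR (Z.of_nat 56)) with 56. lra.
Qed.

Lemma p3_10 : Rbar_le (CJ J12 (1 / INR 10)) (Finite (cval 10)) /\ Rbar_le (CJ Jsym (1 / INR 10)) (Finite (dval 10)).
Proof.
  apply (part3_n 10 13085 6374 51 62); try lia.
  - vm_compute; reflexivity.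
  - vm_compute; reflexivity.
  - rewrite !INR_IZR_INZ. change (IZR (Z.of_nat 10)) with 10. change (IZR (Z.of_nat 51)) with 51. lra.
  - rewrite !INR_IZR_INZ. change (IZR (Z.of_nat 10)) with 10. change (IZR (Z.of_nat 62)) with 62. lra.
Qed.

Lemma part3 n : (2 <= n <= 10)%nat ->
  Rbar_le (CJ J12 (1 / INR n)) (Finite (cval n)) /\ Rbar_le (CJ Jsym (1 / INR n)) (Finite (dval n)).
Proof.
  intros Hn.
  destruct n as [|[|[|[|[|[|[|[|[|[|[|n]]]]]]]]]]]; try lia;
  [exact p3_2|exact p3_3|exact p3_4|exact p3_5|exact p3_6|exact p3_7|exact p3_8|exact p3_9|exact p3_10].
Qed.

Theorem lemma2 :
  (forall p : R, 0 < p < 1 ->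
     Rbar_lt (CJ J12 p) (Finite (12183/10000 + 16066/10000 * (p / (1 - p))))) /\
  (forall p : R, 0 < p < 1 ->
     Rbar_lt (CJ Jsym p)
       (Finite (5893/10000 + 9724/10000 * (p / (1 - p))
                + 1405/10000 * (p ^ 2 / (1 - p ^ 2) ^ 2)))) /\
  (forall n : nat, (2 <= n <= 10)%nat ->
     Rbar_le (CJ J12 (1 / INR n)) (Finite (cval n)) /\
     Rbar_le (CJ Jsym (1 / INR n)) (Finite (dval n))).
Proof.
  split; [|split].
  - intros p Hp. eapply Rbar_le_lt_trans.
    + apply CJ_le. intros s Hs. apply (red1 HP1 HP1b s p Hs Hp).
    + unfold Rbar_lt. lra.
  - intros p Hp. eapply Rbar_le_lt_trans.
    + apply CJ_le. intros s Hs. apply (red2 HP2 HP2b s p Hs Hp).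
    + unfold Rbar_lt.
      assert (0 <= p ^ 2 / (1 - p ^ 2) ^ 2).
      { apply Rdiv_le_0_compat; [apply pow2_ge_0|]. apply pow_lt. simpl. nra. }
      lra.
  - exact part3.
Qed.
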